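(* Let $K>1$ be real, $q\ge2$, and let $\mathbf{u}$ be a probability distribution on $[1:q]$. For all sufficiently large $n$, if $\mathbf{t}\in\mathcal{N}_{q,n}$ satisfies $|t_i-(n+1)u_i|\ge K\sqrt{n\log n}$ for some $i\in[1:q]$, then $$M_{n,\mathbf{u}}(\mathbf{t})\le n^{-\frac12(K^2-1)}.$$
   Context: $\mathcal{N}_{q,n}=\{\mathbf{t}\in\mathbb{Z}_{\ge0}^q:\sum_it_i=n\}$; $M_{n,\mathbf{u}}(\mathbf{t})=\frac{n!}{t_1!\cdots t_q!}\prod_iu_i^{t_i}$ (with $0^0=1$). Logarithms base 2. *)

(* Defs.v *)
From mathcomp Require Import all_boot all_order all_algebra.
From mathcomp Require Import reals exp.
Set Implicit Arguments. Unset Strict Implicit. Unset Printing Implicit Defensive.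
Import Order.TTheory GRing.Theory Num.Theory.
Local Open Scope ring_scope.

Definition log2 {R : realType} (x : R) : R := ln x / ln 2.

Definition inN (q n : nat) (t : 'I_q -> nat) : bool := (\sum_(i < q) t i)%N == n.

Definition is_prob {R : realType} (q : nat) (u : 'I_q -> R) : Prop :=
  (forall i, 0 <= u i) /\ \sum_(i < q) u i = 1.

(* multinomial probability M_{n,u}(t) = n!/(t_1!...t_q!) prod u_i^{t_i}, 0^0 = 1 *)
Definition Mult {R : realType} (q n : nat) (u : 'I_q -> R) (t : 'I_q -> nat) : R :=
  (n`!)%:R / (\prod_(i < q) ((t i)`!)%:R) * \prod_(i < q) u i ^+ t i.

(* Main.v *)
Require Import Defs.
From mathcomp Require Import all_boot all_order all_algebra.
From mathcomp Require Import reals exp sequences.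
From mathcomp Require Import ring lra.
Import Order.TTheory GRing.Theory Num.Theory.
Local Open Scope ring_scope.

Section S.
Variable R : realType.

Lemma exp4 (x : R) : 0 <= x -> (1 + x / 4) ^+ 4 <= expR x.
Proof.
move=> x0.
have -> : x = 4%:R * (x / 4) by field.
rewrite expRM_natl.
have -> : 4%:R * (x / 4) / 4 = x / 4 by field.
apply: lerXn2r; rewrite ?nnegrE ?expR_ge0 //; first lra.
exact: expR_ge1Dx.
Qed.

Lemma poly_aux (y : R) : 0 <= y ->
  1 <= (1 - 4 * y + 5/8 * (4 * y) ^+ 2) * (1 + 4 * y / 4) ^+ 4.
Proof.
move=> y0.
have : 0 <= y^+3 * (20 + 45 * y + 36 * y^+2 + 10 * y^+3).
  apply: mulr_ge0; first exact: exprn_ge0.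
  have := exprn_ge0 2 y0; have := exprn_ge0 3 y0. lra.
suff -> : (1 - 4 * y + 5/8 * (4 * y) ^+ 2) * (1 + 4 * y / 4) ^+ 4
   = 1 + y ^+ 3 * (20 + 45 * y + 36 * y ^+ 2 + 10 * y ^+ 3) by lra.
by field.
Qed.

Lemma expN_le (mu : R) : mu <= 0 -> expR mu <= 1 + mu + 5/8 * mu ^+ 2.
Proof.
move=> m0.
have [x hx] : exists x, x = - mu by eexists.
have x0 : 0 <= x by rewrite hx; lra.
have E := @exp4 x x0.
have -> : mu = - x by rewrite hx opprK.
rewrite expRN sqrrN.
have Ep : 0 < expR x := expR_gt0 x.
have Q : 0 < 1 - x + 5/8 * x ^+ 2.
  have : 0 <= (x - 4/5) ^+ 2 by apply: sqr_ge0.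
  have : 0 <= x ^+ 2 by apply: sqr_ge0.
  have -> : (x - 4/5) ^+ 2 = x^+2 - 8/5 * x + 16/25 by field.
  lra.
rewrite -[X in X <= _]mul1r ler_pdivrMr //.
apply: (le_trans _ (ler_wpM2l (ltW Q) E)).
have -> : x = 4 * (x / 4) by field.
apply: poly_aux; lra.
Qed.

Lemma ln2_le : ln (2 : R) <= 4/5.
Proof.
have E := @exp4 (4/5) ltac:(lra).
have h2 : (2:R) <= expR (4/5).
  apply: le_trans E. have -> : (1 + 4 / 5 / 4 : R) = 6/5 by field. 
  rewrite -[X in X <= _]/((2:R)). 
  have -> : ((6/5 : R)^+4) = 1296/625 by rewrite !exprS expr0; field.
  lra.
rewrite -[X in _ <= X]expRK ler_ln // posrE ?expR_gt0 //.
Qed.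
Lemma multi q (w : 'I_q -> R) : (forall j, 0 <= w j) -> forall m (t : 'I_q -> nat),
  (\sum_j t j)%N = m ->
  (m`!)%:R / (\prod_j ((t j)`!)%:R) * \prod_j w j ^+ t j <= (\sum_j w j) ^+ m.
Proof.
move=> w0; elim=> [|m IH] t Ht.
  have t0 j : t j = 0%N.
    by apply/eqP; rewrite -leqn0 -Ht (bigD1 j) //= leq_addr.
  rewrite expr0 big1 ?big1 ?fact0 ?divr1 ?mulr1 // => j _; by rewrite t0.
set G := (_ * _).
have SW : 0 <= \sum_j w j by apply: sumr_ge0.
have -> : G = \sum_j ((t j)%:R / (m.+1)%:R * G).
  by rewrite -mulr_suml -mulr_suml -natr_sum Ht mulfV ?pnatr_eq0 // mul1r.
rewrite exprS mulr_suml; apply: ler_sum => j _.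
case Etj: (t j) => [|s].
  by rewrite !mul0r; apply: mulr_ge0 => //; apply: exprn_ge0.
pose t' := fun k => if k == j then s else t k.
have Ht' : (\sum_k t' k)%N = m.
  move: Ht; rewrite (bigD1 j) //= => Ht.
  rewrite (bigD1 j) //= /t' eqxx; move: Ht; rewrite Etj addSn => -[<-].
  congr (_ + _)%N; apply: eq_bigr => k /negbTE ->; done.
have := IH t' Ht'.
set G' := (_ * _) => HG'.
apply: le_trans (ler_wpM2l (w0 j) HG').
pose P0 := \prod_(k | k != j) ((t k)`!)%:R : R.
pose W0 := \prod_(k | k != j) w k ^+ t k.
have h1 : \prod_k ((t k)`!)%:R = ((s.+1)`!)%:R * P0 :> R by rewrite (bigD1 j) //= Etj.
have h2 : \prod_k ((t' k)`!)%:R = (s`!)%:R * P0 :> R.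
  rewrite (bigD1 j) //= /t' eqxx; congr (_ * _); apply: eq_bigr => k /negbTE -> //.
have h3 : \prod_k w k ^+ t k = w j ^+ s.+1 * W0 by rewrite (bigD1 j) //= Etj.
have h4 : \prod_k w k ^+ t' k = w j ^+ s * W0.
  rewrite (bigD1 j) //= /t' eqxx; congr (_ * _); apply: eq_bigr => k /negbTE -> //.
have hP0 : P0 != 0.
  rewrite /P0 -natr_prod pnatr_eq0 -lt0n prodn_gt0 // => k; exact: fact_gt0.
have hs : (s`!)%:R != 0 :> R by rewrite pnatr_eq0 -lt0n fact_gt0.
rewrite /G' h2 h4 /G h1 h3 !factS !natrM exprS.
rewrite le_eqVlt; apply/orP; left; apply/eqP.
field.
by rewrite hP0 hs /= !(addrC 1) !natr1 !pnatr_eq0.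
Qed.

Lemma tail q n (u : 'I_q -> R) (t : 'I_q -> nat) (S : pred 'I_q) (d : R) :
  (forall j, 0 <= u j) -> \sum_j u j = 1 -> (\sum_j t j)%N = n -> (0 < n)%N -> 0 <= d ->
  (\sum_(j | S j) t j)%:R <= n%:R * (\sum_(j | S j) u j) - d ->
  Mult n u t <= expR (- (2/5) * (d ^+ 2 / n%:R)).
Proof.
move=> u0 u1 Ht n0 d0 HT.
set P := \sum_(j | S j) u j in HT *.
set T := (\sum_(j | S j) t j)%:R in HT *.
set nn := n%:R in HT *.
have nn0 : 0 < nn by rewrite /nn ltr0n.
set e := d / nn.
have e0 : 0 <= e by rewrite /e divr_ge0 // ltW.
have hd : d = e * nn by rewrite /e mulfVK // gt_eqF.
set mu := - (4/5) * e.
have mu0 : mu <= 0 by rewrite /mu; lra.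
set a := expR mu.
have a0 : 0 < a := expR_gt0 mu.
have P0 : 0 <= P by apply: sumr_ge0.
have P1 : P <= 1.
  rewrite -u1 /P [X in _ <= X](bigID S) /= lerDl; exact: sumr_ge0.
pose w j := if S j then u j * a else u j.
have w0 j : 0 <= w j by rewrite /w; case: (S j) => //; apply: mulr_ge0 => //; exact: ltW.
have M := @multi _ w w0 _ _ Ht.
have hW : \prod_j w j ^+ t j = \prod_j u j ^+ t j * expR (T * mu).
  rewrite /T natr_sum mulr_suml expR_sum [X in _ = _ * X]big_mkcond -big_split /=.
  apply: eq_bigr => j _; rewrite /w; case: (S j) => /=.
    by rewrite exprMn expRM_natl.
  by rewrite mulr1.
have hS : \sum_j w j = 1 + (a - 1) * P.
  rewrite /P mulr_sumr [X in _ = _ + X]big_mkcond /= -[X in _ = X + _]u1 -big_split /=.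
  apply: eq_bigr => j _; rewrite /w; case: (S j) => /=.
    by ring.
  by rewrite addr0.
rewrite hW hS mulrA in M.
have E1 : (1 + (a - 1) * P) ^+ n <= expR (nn * ((a - 1) * P)).
  rewrite /nn expRM_natl; apply: lerXn2r; rewrite ?nnegrE ?expR_ge0 //.
    nra.
  exact: expR_ge1Dx.
have M2 : Mult n u t <= expR (nn * ((a - 1) * P) - T * mu).
  rewrite expRB ler_pdivlMr ?expR_gt0 //; exact: le_trans M E1.
apply: le_trans M2 _; rewrite ler_expR.
have A1 : a - 1 <= mu + 5/8 * mu ^+ 2 by have := @expN_le mu mu0; rewrite -/a; lra.
have k1 : nn * (P * (a - 1)) <= nn * (P * (mu + 5/8 * mu ^+ 2)).
  by apply: ler_wpM2l; [exact: ltW | exact: ler_wpM2l].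
have k2 : e * T <= e * (nn * P - d) by exact: ler_wpM2l.
have k3 : nn * (P * e ^+ 2) <= nn * e ^+ 2.
  apply: ler_wpM2l; first exact: ltW.
  by rewrite -[X in _ <= X]mul1r; apply: ler_wpM2r => //; exact: sqr_ge0.
rewrite hd in k2 *.
have -> : e * nn * (e * nn) / nn = e * e * nn by field; rewrite gt_eqF.
rewrite /mu in k1 *.
nra.
Qed.
End S.

Theorem corollary3 (R : realType) (K : R) (q : nat) (u : 'I_q -> R) :
  1 < K -> (2 <= q)%N -> is_prob u ->
  exists N : nat, forall n : nat, (N <= n)%N ->
    forall t : 'I_q -> nat, inN n t ->
      (exists i : 'I_q,
          K * Num.sqrt (n%:R * log2 (n%:R : R)) <= `| (t i)%:R - (n.+1)%:R * u i |) ->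
      Mult n u t <= powR (n%:R : R) (- ((K ^+ 2 - 1) / 2)).
Proof.
move=> K1 _ [u0 u1].
exists (maxn 2 (Num.Def.trunc (4 * K ^+ 2)).+1) => n; rewrite geq_max => /andP [n2 nK] t /eqP Ht [i Hi].
set nn := n%:R : R.
have nn2 : 2 <= nn by rewrite /nn (ler_nat R 2 n).
have nnK : 4 * K ^+ 2 < nn.
  apply: lt_le_trans (truncnS_gt _) _; rewrite /nn ler_nat //.
have n0 : (0 < n)%N by apply: leq_trans n2.
have ln2p : 0 < ln (2 : R) by apply: ln_gt0; lra.
have lnn2 : ln 2 <= ln nn by rewrite ler_ln // posrE; lra.
set L := log2 nn.
have L1 : 1 <= L by rewrite /L /log2 ler_pdivlMr // mul1r.
have lnL : ln nn <= 4/5 * L.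
  have -> : ln nn = ln 2 * L by rewrite /L /log2 mulrC mulfVK // gt_eqF.
  apply: ler_wpM2r; [lra | exact: ln2_le].
have nL0 : 0 <= nn * L by apply: mulr_ge0; lra.
set s := Num.sqrt (nn * L) in Hi.
have s2 : s ^+ 2 = nn * L by rewrite /s sqr_sqrtr.
have s0 : 0 <= s by rewrite /s sqrtr_ge0.
have s2K : 2 * K <= s.
  have : (2 * K) ^+ 2 <= s ^+ 2 by rewrite s2; nra.
  by rewrite ler_pXn2r // nnegrE; lra.
set d := K * s - 1.
have d0 : 0 <= d by rewrite /d; nra.
have ui1 : u i <= 1.
  by rewrite -u1 (bigD1 i) //= lerDl; apply: sumr_ge0.
have B : Mult n u t <= expR (- (2/5) * (d ^+ 2 / nn)).
  move: Hi; rewrite ler_normr => /orP [H|H].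
  - apply: (@tail R q n u t (fun j => j != i) d u0 u1 Ht n0 d0).
    have hT : (\sum_(j | j != i) t j)%:R = nn - (t i)%:R :> R.
      by rewrite /nn -Ht [in RHS](bigD1 i) //= natrD; lra.
    have hP : \sum_(j | j != i) u j = 1 - u i.
      by rewrite -u1 [in RHS](bigD1 i) //=; lra.
    rewrite hT hP /d.
    have E : (n.+1)%:R = nn + 1 :> R by rewrite /nn -natr1.
    rewrite E in H; rewrite -/nn; have := u0 i; nra.
  - apply: (@tail R q n u t (fun j => j == i) d u0 u1 Ht n0 d0).
    rewrite !big_pred1_eq /d.
    have E : (n.+1)%:R = nn + 1 :> R by rewrite /nn -natr1.
    rewrite E in H; rewrite -/nn; have := u0 i; nra.
apply: le_trans B _.
rewrite /powR ifF; last by apply/negbTE; rewrite /nn pnatr_eq0 -lt0n.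
rewrite ler_expR.
suff : (K ^+ 2 - 1) / 2 * ln nn <= 2/5 * (d ^+ 2 / nn) by lra.
rewrite mulrA ler_pdivlMr; last lra.
have h1 : (K ^+ 2 - 1) * (ln nn * nn) <= (K ^+ 2 - 1) * (4/5 * L * nn).
  apply: ler_wpM2l; first nra.
  apply: ler_wpM2r; lra.
have h2 : 0 <= s * (s - 2 * K) by apply: mulr_ge0; lra.
rewrite /d.
have e : L * nn = s ^+ 2 by rewrite s2 mulrC.
nra.
Qed.
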